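(* Let $n\ge p\ge 1$, $A$ an $n\times n$ symmetric matrix, $N=\operatorname{diag}(\mu_1,\dots,\mu_p)$ with $0<\mu_1<\dots<\mu_p$, $f(X)=\operatorname{tr}(X^TAXN)$ on $\mathrm{St}(p,n)$, and $R_X(\xi)=\mathrm{qf}(X+\xi)$ the QR retraction. For any (smooth) Riemannian metric $\langle\cdot,\cdot\rangle$ on $\mathrm{St}(p,n)$ there exists $L>0$ such that \[ \bigl|\mathrm{D}(f\circ R_X)(t\eta)[\eta]-\mathrm{D}(f\circ R_X)(0)[\eta]\bigr|\le Lt \] for all $X\in\mathrm{St}(p,n)$, $\eta\in T_X\mathrm{St}(p,n)$ with $\|\eta\|_X=1$ (norm from that metric), and $t\ge 0$. In particular ($p=1$) this holds for $f(x)=x^TAx$ on $S^{n-1}$ with the metric $g_x(\xi,\eta)=\xi^TG_x\eta$, $G_x=\operatorname{diag}(10000(x^{(1)})^2+1,1,\dots,1)$, and the retraction $R_x(\xi)=(x+\xi)/\|x+\xi\|$.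
   Context: $\mathrm{St}(p,n)=\{X\in\mathbb{R}^{n\times p}: X^TX=I_p\}$; for a full-rank $B\in\mathbb{R}^{n\times p}$, $\mathrm{qf}(B)$ denotes the $Q$-factor of the unique decomposition $B=QR'$ with $Q\in\mathrm{St}(p,n)$ and $R'$ upper triangular with positive diagonal. $x^{(1)}$ denotes the first component of $x$. *)

(* Defs.v *)
(* Stdlib (classical reals). Matrices are functions nat -> nat -> R,
   with explicit dimensions; entries outside the dimension range are required
   to be zero where relevant (see [supp]). *)
From Stdlib Require Import Reals ClassicalEpsilon.
Open Scope R_scope.

Definition mat := nat -> nat -> R.

Fixpoint rsum (k : nat) (f : nat -> R) : R :=
  match k with O => 0 | S k' => rsum k' f + f k' end.

Definition mzero : mat := fun _ _ => 0.
Definition madd (A B : mat) : mat := fun i j => A i j + B i j.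
Definition mscale (c : R) (A : mat) : mat := fun i j => c * A i j.
Definition mmul (k : nat) (A B : mat) : mat :=
  fun i j => rsum k (fun l => A i l * B l j).
Definition mtr (A : mat) : mat := fun i j => A j i.
Definition mtrace (k : nat) (A : mat) : R := rsum k (fun i => A i i).
Definition diagm (mu : nat -> R) : mat := fun i j => if Nat.eqb i j then mu i else 0.
Definition idm : mat := fun i j => if Nat.eqb i j then 1 else 0.
Definition elem (i j : nat) : mat :=
  fun a b => if andb (Nat.eqb a i) (Nat.eqb b j) then 1 else 0.

Definition supp (n p : nat) (X : mat) : Prop :=
  forall i j, (n <= i)%nat \/ (p <= j)%nat -> X i j = 0.

Definition meq (m k : nat) (A B : mat) : Prop :=
  forall i j, (i < m)%nat -> (j < k)%nat -> A i j = B i j.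

Definition symmetric (n : nat) (A : mat) : Prop :=
  forall i j, (i < n)%nat -> (j < n)%nat -> A i j = A j i.

Definition stiefel (n p : nat) (X : mat) : Prop :=
  supp n p X /\ meq p p (mmul n (mtr X) X) idm.

Definition tangent (n p : nat) (X xi : mat) : Prop :=
  supp n p xi /\ meq p p (madd (mmul n (mtr X) xi) (mmul n (mtr xi) X)) mzero.

Definition upper_pos_diag (p : nat) (R' : mat) : Prop :=
  (forall i j, (j < i < p)%nat -> R' i j = 0) /\
  (forall i, (i < p)%nat -> 0 < R' i i).

Definition is_qf (n p : nat) (B Q : mat) : Prop :=
  stiefel n p Q /\
  exists R', upper_pos_diag p R' /\ meq n p B (mmul p Q R').

(* qf(B): the (unique, for full-rank B) Q-factor *)
Definition qf (n p : nat) (B : mat) : mat :=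
  epsilon (inhabits mzero) (fun Q => is_qf n p B Q).

Definition costf (n p : nat) (A : mat) (mu : nat -> R) (X : mat) : R :=
  mtrace p (mmul p (mmul n (mmul n (mtr X) A) X) (diagm mu)).

Definition qr_retr (n p : nat) (X xi : mat) : mat := qf n p (madd X xi).

Definition mat_continuous (n p : nat) (F : mat -> R) : Prop :=
  forall X eps, 0 < eps -> exists delta, 0 < delta /\
    forall Y, (forall i j, (i < n)%nat -> (j < p)%nat -> Rabs (Y i j - X i j) < delta) ->
      Rabs (F Y - F X) < eps.

Fixpoint mat_Ck (n p : nat) (k : nat) (F : mat -> R) : Prop :=
  match k with
  | O => mat_continuous n p F
  | S k' => mat_continuous n p F /\
      forall i j, (i < n)%nat -> (j < p)%nat ->
        exists dF : mat -> R,
          (forall X, derivable_pt_lim (fun s => F (madd X (mscale s (elem i j)))) 0 (dF X))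
          /\ mat_Ck n p k' dF
  end.

Definition mat_smooth (n p : nat) (F : mat -> R) : Prop := forall k, mat_Ck n p k F.

(* A smooth Riemannian metric g (g X xi eta = <xi,eta>_X) on St(p,n):
   at each X in St(p,n) it is a symmetric, bilinear, positive definite form on
   T_X St(p,n), and it depends smoothly on X, in the sense that its
   coefficients are restrictions to St(p,n) of smooth functions on the ambient
   space R^{n x p}. *)
Definition riemannian_metric (n p : nat) (g : mat -> mat -> mat -> R) : Prop :=
  (forall X, stiefel n p X ->
     (forall xi eta, tangent n p X xi -> tangent n p X eta -> g X xi eta = g X eta xi) /\
     (forall a b xi1 xi2 eta, tangent n p X xi1 -> tangent n p X xi2 -> tangent n p X eta ->
        g X (madd (mscale a xi1) (mscale b xi2)) eta = a * g X xi1 eta + b * g X xi2 eta) /\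
     (forall xi, tangent n p X xi -> (exists i j, xi i j <> 0) -> 0 < g X xi xi)) /\
  exists Gc : nat -> nat -> nat -> nat -> mat -> R,
    (forall i j k l, mat_smooth n p (Gc i j k l)) /\
    (forall X xi eta, stiefel n p X -> tangent n p X xi -> tangent n p X eta ->
       g X xi eta =
       rsum n (fun i => rsum p (fun j => rsum n (fun k => rsum p (fun l =>
         Gc i j k l X * xi i j * eta k l))))).

Definition vec := nat -> R.
Definition vdot (n : nat) (x y : vec) : R := rsum n (fun i => x i * y i).
Definition vnorm (n : nat) (x : vec) : R := sqrt (vdot n x x).
Definition vadd (x y : vec) : vec := fun i => x i + y i.
Definition vscale (c : R) (x : vec) : vec := fun i => c * x i.
Definition sphere_cost (n : nat) (A : mat) (x : vec) : R :=
  rsum n (fun i => rsum n (fun k => x i * A i k * x k)).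
Definition sphere_retr (n : nat) (x xi : vec) : vec :=
  vscale (/ vnorm n (vadd x xi)) (vadd x xi).
Definition sphere_metric (n : nat) (x xi eta : vec) : R :=
  rsum n (fun i => (if Nat.eqb i 0 then 10000 * (x 0%nat)^2 + 1 else 1) * xi i * eta i).

(* Main.v *)
Require Import Defs.
From Stdlib Require Import Reals.
From Stdlib Require Import Lra Lia ClassicalEpsilon FunctionalExtensionality List.
Open Scope R_scope.


Lemma rsum_ext k f g : (forall i, (i < k)%nat -> f i = g i) -> rsum k f = rsum k g.
Proof. induction k; simpl; intros H; auto. rewrite IHk, H; auto; intros; apply H; lia. Qed.

Lemma rsum_plus k f g : rsum k (fun i => f i + g i) = rsum k f + rsum k g.
Proof. induction k; simpl; [lra|rewrite IHk; lra]. Qed.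

Lemma rsum_scal k c f : rsum k (fun i => c * f i) = c * rsum k f.
Proof. induction k; simpl; [lra|rewrite IHk; lra]. Qed.

Lemma rsum_scalr k c f : rsum k (fun i => f i * c) = rsum k f * c.
Proof. induction k; simpl; [lra|rewrite IHk; lra]. Qed.

Lemma rsum_zero k f : (forall i, (i < k)%nat -> f i = 0) -> rsum k f = 0.
Proof. intros H; rewrite (rsum_ext k f (fun _ => 0)); auto. clear H. induction k; simpl; auto. rewrite IHk; lra. Qed.

Lemma rsum_swap k m (f : nat -> nat -> R) :
  rsum k (fun i => rsum m (fun j => f i j)) = rsum m (fun j => rsum k (fun i => f i j)).
Proof. induction k; simpl. symmetry; apply rsum_zero; auto.
  rewrite IHk, <- rsum_plus; auto. Qed.

Lemma rsum_nonneg k f : (forall i, (i < k)%nat -> 0 <= f i) -> 0 <= rsum k f.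
Proof. induction k; simpl; intros; [lra|]. assert (0 <= f k) by (apply H; lia).
  assert (0 <= rsum k f) by (apply IHk; intros; apply H; lia). lra. Qed.

Lemma rsum_le k f g : (forall i, (i < k)%nat -> f i <= g i) -> rsum k f <= rsum k g.
Proof. induction k; simpl; intros; [lra|]. assert (f k <= g k) by (apply H; lia).
  assert (rsum k f <= rsum k g) by (apply IHk; intros; apply H; lia). lra. Qed.

Lemma rsum_delta k j f : (j < k)%nat ->
  rsum k (fun i => if Nat.eqb i j then f i else 0) = f j.
Proof. induction k; intros; [lia|]. simpl. destruct (Nat.eq_dec j k).
  - subst. rewrite Nat.eqb_refl. rewrite rsum_zero; [lra|].
    intros i Hi. destruct (Nat.eqb_spec i k); [lia|auto].
  - rewrite IHk by lia. destruct (Nat.eqb_spec k j); [lia|lra]. Qed.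

Lemma rsum_delta' k j f : (j < k)%nat ->
  rsum k (fun i => if Nat.eqb j i then f i else 0) = f j.
Proof. intros. rewrite <- (rsum_delta k j f) by auto. apply rsum_ext; intros.
  rewrite Nat.eqb_sym; auto. Qed.

Lemma rsum_single k m f : (m <= k)%nat -> (forall i, (m <= i < k)%nat -> f i = 0) ->
  rsum k f = rsum m f.
Proof. induction k; intros; simpl. replace m with 0%nat by lia; auto.
  destruct (Nat.eq_dec m (S k)). subst; simpl; auto.
  rewrite IHk; [rewrite H0 by lia; lra|lia|intros; apply H0; lia]. Qed.

Lemma rsum_term_le k f j : (j < k)%nat -> (forall i, (i < k)%nat -> 0 <= f i) -> f j <= rsum k f.
Proof. induction k; intros; [lia|]. simpl. destruct (Nat.eq_dec j k).
  subst. assert (0 <= rsum k f) by (apply rsum_nonneg; intros; apply H0; lia). lra.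
  assert (f j <= rsum k f) by (apply IHk; [lia|intros; apply H0; lia]).
  assert (0 <= f k) by (apply H0; lia). lra. Qed.

Lemma rsum_opp k f : rsum k (fun i => - f i) = - rsum k f.
Proof. induction k; simpl; [lra|rewrite IHk; lra]. Qed.

Lemma rsum_minus k f g : rsum k (fun i => f i - g i) = rsum k f - rsum k g.
Proof. induction k; simpl; [lra|rewrite IHk; lra]. Qed.

Definition env := nat -> nat -> nat -> R.

Inductive ex :=
| ECst (r : R) | EPar (k i j : nat) | ETau
| EAdd (a b : ex) | EMul (a b : ex) | EInv (a : ex) | ESqrt (a : ex).

Fixpoint ev (e : env) (s : R) (x : ex) : R :=
  match x with
  | ECst r => r | EPar k i j => e k i j | ETau => s
  | EAdd a b => ev e s a + ev e s b
  | EMul a b => ev e s a * ev e s b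
  | EInv a => / ev e s a
  | ESqrt a => sqrt (ev e s a)
  end.

Fixpoint D (x : ex) : ex :=
  match x with
  | ECst _ => ECst 0 | EPar _ _ _ => ECst 0 | ETau => ECst 1
  | EAdd a b => EAdd (D a) (D b)
  | EMul a b => EAdd (EMul (D a) b) (EMul a (D b))
  | EInv a => EMul (ECst (-1)) (EMul (D a) (EInv (EMul a a)))
  | ESqrt a => EMul (D a) (EInv (EMul (ECst 2) (ESqrt a)))
  end.

Fixpoint wf (e : env) (s : R) (x : ex) : Prop :=
  match x with
  | ECst _ | EPar _ _ _ | ETau => True
  | EAdd a b | EMul a b => wf e s a /\ wf e s b
  | EInv a => wf e s a /\ ev e s a <> 0
  | ESqrt a => wf e s a /\ 0 < ev e s a
  end.

Fixpoint vin (P : nat -> nat -> nat -> Prop) (x : ex) : Prop :=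
  match x with
  | ECst _ | ETau => True
  | EPar k i j => P k i j
  | EAdd a b | EMul a b => vin P a /\ vin P b
  | EInv a | ESqrt a => vin P a
  end.

Lemma wf_D e s x : wf e s x -> wf e s (D x).
Proof.
  induction x; simpl; intros W; try tauto;
  destruct W as [W1 W2]; repeat split; auto;
  try (intros H; apply Rmult_integral in H; tauto);
  try (assert (0 < sqrt (ev e s x)) by (apply sqrt_lt_R0; auto); lra).
Qed.

Lemma vin_D P x : vin P x -> vin P (D x).
Proof. induction x; simpl; intuition. Qed.

Lemma dpl_ext f g x l l' : derivable_pt_lim f x l -> (forall u, f u = g u) -> l = l' ->
  derivable_pt_lim g x l'.
Proof. intros H1 H2 H3. subst. replace g with f; auto. apply functional_extensionality; auto. Qed.

Lemma ev_deriv e x s : wf e s x -> derivable_pt_lim (fun u => ev e u x) s (ev e s (D x)).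
Proof.
  induction x; simpl; intros W.
  - apply (dpl_ext _ _ _ _ _ (derivable_pt_lim_const r s)); reflexivity.
  - apply (dpl_ext _ _ _ _ _ (derivable_pt_lim_const (e k i j) s)); reflexivity.
  - apply (dpl_ext _ _ _ _ _ (derivable_pt_lim_id s)); reflexivity.
  - destruct W. apply (dpl_ext _ _ _ _ _ (derivable_pt_lim_plus _ _ _ _ _ (IHx1 H) (IHx2 H0))); reflexivity.
  - destruct W. apply (dpl_ext _ _ _ _ _ (derivable_pt_lim_mult _ _ _ _ _ (IHx1 H) (IHx2 H0))); reflexivity.
  - destruct W. apply (dpl_ext _ _ _ _ _ (derivable_pt_lim_div (fct_cte 1) _ _ _ _ (derivable_pt_lim_const 1 s) (IHx H) H0)).
    intros; unfold div_fct, fct_cte; lra. unfold fct_cte, Rsqr. field; auto.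
  - destruct W. apply (dpl_ext _ _ _ _ _ (derivable_pt_lim_comp _ sqrt _ _ _ (IHx H) (derivable_pt_lim_sqrt _ H0))).
    intros; reflexivity. assert (0 < sqrt (ev e s x)) by (apply sqrt_lt_R0; auto). field; lra.
Qed.

Lemma CV_const c : Un_cv (fun _ => c) c.
Proof. intros eps H; exists 0%nat; intros; unfold Rdist; rewrite Rminus_diag, Rabs_R0; auto. Qed.

Lemma CV_inv u l : Un_cv u l -> l <> 0 -> Un_cv (fun m => / u m) (/ l).
Proof. intros. apply (continuity_seq Rinv u l); auto.
  apply derivable_continuous_pt. exists (- / l ^ 2).
  apply (dpl_ext _ _ _ _ _ (derivable_pt_lim_div (fct_cte 1) id l _ _ (derivable_pt_lim_const 1 l) (derivable_pt_lim_id l) H0)).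
  intros; unfold div_fct, fct_cte, id; lra. unfold fct_cte, id, Rsqr; field; auto. Qed.

Lemma ev_cont P e s x (es : nat -> env) (ss : nat -> R) :
  wf e s x -> vin P x ->
  (forall k i j, P k i j -> Un_cv (fun m => es m k i j) (e k i j)) ->
  Un_cv ss s -> Un_cv (fun m => ev (es m) (ss m) x) (ev e s x).
Proof.
  intros W V HP Hs. induction x; simpl in *.
  - apply CV_const.
  - auto.
  - auto.
  - destruct W, V. apply CV_plus; auto.
  - destruct W, V. apply CV_mult; auto.
  - destruct W. apply CV_inv; auto.
  - destruct W. apply (continuity_seq sqrt); auto. apply continuity_pt_sqrt; lra.
Qed.


Definition cdot n (Q : mat) k (B : mat) j := rsum n (fun l => Q l k * B l j).
Definition gres n (B Q : mat) m i := B i m + -1 * rsum m (fun k => cdot n Q k B m * Q i k).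
Fixpoint gs n (B : mat) m : mat :=
  match m with
  | O => mzero
  | S m' => fun i j => if Nat.eqb j m' then
       gres n B (gs n B m') m' i * / sqrt (rsum n (fun l => gres n B (gs n B m') m' l * gres n B (gs n B m') m' l))
     else gs n B m' i j
  end.
Definition nrm n B m := rsum n (fun l => gres n B (gs n B m) m l * gres n B (gs n B m) m l).
Fixpoint gsU n (B : mat) m : mat :=
  match m with
  | O => mzero
  | S m' => fun i j => if Nat.eqb j m' then
       ((if Nat.eqb i m' then 1 else 0) + -1 * rsum m' (fun k => cdot n (gs n B m') k B m' * gsU n B m' i k))
        * / sqrt (nrm n B m')
     else gsU n B m' i j
  end.

Definition q n B j i := gs n B (S j) i j.
Definition u n B j i := gsU n B (S j) i j.

Lemma gs_col n B m i j : gs n B m i j = if Nat.ltb j m then q n B j i else 0.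
Proof. induction m; simpl. destruct (Nat.ltb_spec j 0); [lia|reflexivity].
  destruct (Nat.eqb_spec j m). subst. destruct (Nat.ltb_spec m (S m)); [|lia].
  unfold q; simpl; rewrite Nat.eqb_refl; reflexivity.
  rewrite IHm. destruct (Nat.ltb_spec j m), (Nat.ltb_spec j (S m)); auto; lia. Qed.

Lemma gsU_col n B m i j : gsU n B m i j = if Nat.ltb j m then u n B j i else 0.
Proof. induction m; simpl. destruct (Nat.ltb_spec j 0); [lia|reflexivity].
  destruct (Nat.eqb_spec j m). subst. destruct (Nat.ltb_spec m (S m)); [|lia].
  unfold u; simpl; rewrite Nat.eqb_refl; reflexivity.
  rewrite IHm. destruct (Nat.ltb_spec j m), (Nat.ltb_spec j (S m)); auto; lia. Qed.

Lemma gs_lt n B m i k : (k < m)%nat -> gs n B m i k = q n B k i.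
Proof. intros; rewrite gs_col; destruct (Nat.ltb_spec k m); auto; lia. Qed.
Lemma gs_ge n B m i k : (m <= k)%nat -> gs n B m i k = 0.
Proof. intros; rewrite gs_col; destruct (Nat.ltb_spec k m); auto; lia. Qed.
Lemma gsU_lt n B m i k : (k < m)%nat -> gsU n B m i k = u n B k i.
Proof. intros; rewrite gsU_col; destruct (Nat.ltb_spec k m); auto; lia. Qed.
Lemma gsU_ge n B m i k : (m <= k)%nat -> gsU n B m i k = 0.
Proof. intros; rewrite gsU_col; destruct (Nat.ltb_spec k m); auto; lia. Qed.

Definition cq n B k m := rsum n (fun l => q n B k l * B l m).
Definition rr n B m i := B i m - rsum m (fun k => cq n B k m * q n B k i).

Lemma gres_eq n B m i : gres n B (gs n B m) m i = rr n B m i.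
Proof. unfold gres, rr, cdot, cq. rewrite (rsum_ext m _ (fun k => rsum n (fun l => q n B k l * B l m) * q n B k i)).
  lra. intros k Hk. rewrite gs_lt by auto. f_equal. apply rsum_ext; intros; rewrite (gs_lt n B m); auto. Qed.

Lemma nrm_eq n B m : nrm n B m = rsum n (fun l => rr n B m l * rr n B m l).
Proof. unfold nrm; apply rsum_ext; intros; rewrite gres_eq; auto. Qed.

Lemma q_eq n B m i : q n B m i = rr n B m i * / sqrt (nrm n B m).
Proof. unfold q; simpl; rewrite Nat.eqb_refl, gres_eq; reflexivity. Qed.

Definition ww n B m i := (if Nat.eqb i m then 1 else 0) - rsum m (fun k => cq n B k m * u n B k i).

Lemma u_eq n B m i : u n B m i = ww n B m i * / sqrt (nrm n B m).
Proof. unfold u, ww; simpl; rewrite Nat.eqb_refl. f_equal.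
  rewrite (rsum_ext m _ (fun k => cq n B k m * u n B k i)). lra.
  intros k Hk. unfold cdot, cq. rewrite gsU_lt by auto. f_equal. apply rsum_ext; intros; rewrite gs_lt; auto. Qed.

Lemma u_upper n B : forall j i, (j < i)%nat -> u n B j i = 0.
Proof.
  intros j; induction j as [j IH] using (well_founded_induction Wf_nat.lt_wf).
  intros i Hi. rewrite u_eq. unfold ww. rewrite rsum_zero.
  destruct (Nat.eqb_spec i j); [lia|]. lra.
  intros k Hk. rewrite IH by lia. lra. Qed.

Definition FR n p (B : mat) := forall w : nat -> R,
  rsum p (fun i => w i * w i) <= rsum n (fun l => rsum p (fun i => B l i * w i) * rsum p (fun i => B l i * w i)).

Definition ON n B m := forall j k, (j < m)%nat -> (k < m)%nat ->
  rsum n (fun l => q n B j l * q n B k l) = if Nat.eqb j k then 1 else 0.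
Definition BU n p B m := forall j, (j < m)%nat -> forall l, q n B j l = rsum p (fun i => B l i * u n B j i).
Definition POS n B m := forall j, (j < m)%nat -> 0 < nrm n B j.

Lemma sqrt_sq_pos x : 0 < x -> 0 < sqrt x /\ sqrt x * sqrt x = x.
Proof. intros; split; [apply sqrt_lt_R0; auto| apply sqrt_sqrt; lra]. Qed.

Lemma gs_step n p B m : FR n p B -> (m < p)%nat -> ON n B m -> BU n p B m -> POS n B m ->
  ON n B (S m) /\ BU n p B (S m) /\ POS n B (S m).
Proof.
  intros HFR Hmp HON HBU HPOS.
  set (c := fun k => cq n B k m).
  assert (Hr : forall l, rr n B m l = rsum p (fun i => B l i * ww n B m i)).
  { intros l. unfold rr, ww.
    rewrite (rsum_ext p _ (fun i => (if Nat.eqb m i then B l i else 0) - rsum m (fun k => cq n B k m * (B l i * u n B k i)))).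
    rewrite rsum_minus, rsum_delta' by auto. f_equal.
    rewrite rsum_swap. apply rsum_ext. intros k Hk. rewrite HBU by auto.
    rewrite <- rsum_scal. apply rsum_ext; intros; lra.
    intros i Hi. rewrite Rmult_minus_distr_l. f_equal.
    destruct (Nat.eqb_spec i m), (Nat.eqb_spec m i); subst; try lia; lra.
    rewrite <- rsum_scal. apply rsum_ext; intros; lra. }
  assert (Hw : ww n B m m = 1).
  { unfold ww. rewrite Nat.eqb_refl, rsum_zero. lra. intros k Hk; rewrite u_upper by auto; lra. }
  assert (Hpos : 0 < nrm n B m).
  { rewrite nrm_eq. eapply Rlt_le_trans; [|rewrite (rsum_ext n _ (fun l => rsum p (fun i => B l i * ww n B m i) * rsum p (fun i => B l i * ww n B m i))); [apply HFR|]].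
    apply Rlt_le_trans with (ww n B m m * ww n B m m). rewrite Hw; lra.
    apply rsum_term_le with (f := fun i => ww n B m i * ww n B m i); auto. intros; nra.
    intros; rewrite Hr; auto. }
  destruct (sqrt_sq_pos _ Hpos) as [Hs1 Hs2]. set (s := sqrt (nrm n B m)) in *.
  assert (Hqm : forall l, q n B m l = rr n B m l * / s) by (intros; apply q_eq).
  assert (Hrq : forall k, (k < m)%nat -> rsum n (fun l => rr n B m l * q n B k l) = 0).
  { intros k Hk. unfold rr.
    rewrite (rsum_ext n _ (fun l => q n B k l * B l m - rsum m (fun k' => cq n B k' m * (q n B k' l * q n B k l)))).
    rewrite rsum_minus. rewrite rsum_swap.
    rewrite (rsum_ext m _ (fun k' => if Nat.eqb k' k then cq n B k' m else 0)).
    rewrite rsum_delta by auto. unfold cq. lra.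
    intros k' Hk'. rewrite rsum_scal. rewrite HON by auto. destruct (Nat.eqb k' k); lra.
    intros l Hl. rewrite Rmult_minus_distr_r. f_equal. lra. rewrite <- rsum_scalr. apply rsum_ext; intros; lra. }
  split; [|split].
  - intros j k Hj Hk.
    assert (Hmm : rsum n (fun l => q n B m l * q n B m l) = 1).
    { rewrite (rsum_ext n _ (fun l => / s * / s * (rr n B m l * rr n B m l))).
      rewrite rsum_scal, <- nrm_eq, <- Hs2. field. lra. intros; rewrite Hqm; lra. }
    assert (Hmk : forall k, (k < m)%nat -> rsum n (fun l => q n B m l * q n B k l) = 0).
    { intros k0 Hk0. rewrite (rsum_ext n _ (fun l => / s * (rr n B m l * q n B k0 l))).
      rewrite rsum_scal, Hrq by auto. lra. intros; rewrite Hqm; lra. }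
    destruct (Nat.eq_dec j m), (Nat.eq_dec k m); subst.
    + rewrite Nat.eqb_refl; auto.
    + rewrite Hmk by lia. destruct (Nat.eqb_spec m k); [lia|auto].
    + rewrite (rsum_ext n _ (fun l => q n B m l * q n B j l)) by (intros; lra). rewrite Hmk by lia.
      destruct (Nat.eqb_spec j m); [lia|auto].
    + apply HON; lia.
  - intros j Hj l. destruct (Nat.eq_dec j m). subst.
    rewrite Hqm, Hr, <- rsum_scalr. apply rsum_ext; intros. rewrite u_eq. fold s. lra.
    apply HBU; lia.
  - intros j Hj. destruct (Nat.eq_dec j m). subst; auto. apply HPOS; lia.
Qed.

Lemma gs_inv n p B m : FR n p B -> (m <= p)%nat -> ON n B m /\ BU n p B m /\ POS n B m.
Proof. intros HFR; induction m; intros Hm.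
  - unfold ON, BU, POS; repeat split; intros; lia.
  - destruct IHm as [A1 [A2 A3]]; [lia|]. apply gs_step; auto; lia. Qed.

Lemma rr_q n B j l : 0 < nrm n B j -> rr n B j l = sqrt (nrm n B j) * q n B j l.
Proof. intros H. rewrite q_eq. destruct (sqrt_sq_pos _ H). field. lra. Qed.

Lemma B_decomp n B j l : B l j = rr n B j l + rsum j (fun k => cq n B k j * q n B k l).
Proof. unfold rr; lra. Qed.

Lemma cq_diag n B j : ON n B (S j) -> 0 < nrm n B j -> cq n B j j = sqrt (nrm n B j).
Proof. intros HON Hp. unfold cq.
  rewrite (rsum_ext n _ (fun l => sqrt (nrm n B j) * (q n B j l * q n B j l) + rsum j (fun k => cq n B k j * (q n B j l * q n B k l)))).
  rewrite rsum_plus, rsum_scal, HON by lia. rewrite Nat.eqb_refl. rewrite rsum_swap.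
  rewrite rsum_zero. lra. intros k Hk. rewrite rsum_scal, HON by lia.
  destruct (Nat.eqb_spec j k); [lia|lra].
  intros l Hl. rewrite (B_decomp n B j l) at 1. rewrite rr_q by auto.
  rewrite Rmult_plus_distr_l. f_equal. lra. rewrite <- rsum_scal. apply rsum_ext; intros; lra. Qed.

Definition gsR n B : mat := fun k j => if Nat.leb k j then cq n B k j else 0.

Lemma gs_exists n p B : supp n p B -> FR n p B ->
  is_qf n p B (gs n B p) /\ POS n B p /\ ON n B p /\ BU n p B p.
Proof.
  intros HS HFR. destruct (gs_inv n p B p HFR (le_n p)) as [HON [HBU HPOS]].
  assert (Hq0 : forall j l, (j < p)%nat -> (n <= l)%nat -> q n B j l = 0).
  { intros j l Hj Hl. rewrite HBU by auto. apply rsum_zero; intros. rewrite HS by lia. lra. }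
  split; [|auto]. split; [split|].
  - intros i j [H|H]. destruct (Nat.ltb_spec j p). rewrite gs_lt by auto. apply Hq0; auto.
    apply gs_ge; auto. apply gs_ge; auto.
  - intros i j Hi Hj. unfold mmul, mtr, idm. rewrite <- HON by auto.
    apply rsum_ext; intros. rewrite !gs_lt by auto. auto.
  - exists (gsR n B). split; [split|].
    + intros i j Hij. unfold gsR. destruct (Nat.leb_spec i j); [lia|auto].
    + intros i Hi. unfold gsR. rewrite Nat.leb_refl. rewrite cq_diag. apply sqrt_lt_R0; apply HPOS; auto.
      intros a b Ha Hb; apply HON; lia. apply HPOS; auto.
    + intros l j Hl Hj. unfold mmul.
      rewrite (rsum_single p (S j)); [|lia|].
      simpl. unfold gsR at 2. rewrite Nat.leb_refl.
      assert (HON' : ON n B (S j)) by (intros a b Ha Hb; apply HON; lia).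
      rewrite (cq_diag n B j HON' (HPOS j Hj)). rewrite (gs_lt n B p l j Hj).
      rewrite (B_decomp n B j l), (rr_q n B j l (HPOS j Hj)).
      rewrite (rsum_ext j (fun l0 => gs n B p l l0 * gsR n B l0 j) (fun k => cq n B k j * q n B k l)). lra.
      intros k Hk. rewrite gs_lt by lia. unfold gsR. destruct (Nat.leb_spec k j); [lra|lia].
      intros k Hk. unfold gsR. destruct (Nat.leb_spec k j); [lia|lra].
Qed.

Lemma gs_uniq n p B Q' R' : supp n p B -> stiefel n p Q' -> upper_pos_diag p R' ->
  meq n p B (mmul p Q' R') ->
  forall m, (m <= p)%nat -> forall j, (j < m)%nat -> (forall l, q n B j l = Q' l j) /\ 0 < nrm n B j /\
     sqrt (nrm n B j) = R' j j.
Proof.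
  intros HS [HQs HQo] [HRu HRp] HE. induction m; intros Hm j Hj; [lia|].
  assert (IH := IHm ltac:(lia)). destruct (Nat.eq_dec j m); [subst|apply IH; lia].
  assert (Hcq : forall k, (k < m)%nat -> cq n B k m = R' k m).
  { intros k Hk. unfold cq. rewrite (rsum_ext n _ (fun l => rsum p (fun k' => Q' l k * Q' l k' * R' k' m))).
    rewrite rsum_swap. rewrite (rsum_ext p _ (fun k' => if Nat.eqb k k' then R' k' m else 0)).
    rewrite rsum_delta' by lia. auto.
    intros k' Hk'. rewrite rsum_scalr. generalize (HQo k k' ltac:(lia) Hk'). unfold mmul, mtr, idm.
    intros ->. destruct (Nat.eqb k k'); lra.
    intros l Hl. destruct (IH k Hk) as [Hq _]. rewrite Hq, HE by lia. unfold mmul. rewrite <- rsum_scal.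
    apply rsum_ext; intros; lra. }
  assert (Hrr : forall l, rr n B m l = R' m m * Q' l m).
  { intros l. unfold rr. rewrite (rsum_ext m _ (fun k => Q' l k * R' k m)).
    destruct (Nat.ltb_spec l n).
    - rewrite HE by lia. unfold mmul. rewrite (rsum_single p (S m)); [|lia|].
      simpl. lra. intros k Hk. rewrite HRu by lia. lra.
    - rewrite HS by (left; lia). rewrite (HQs l m) by (left; lia). rewrite rsum_zero. lra. intros k Hk. rewrite (HQs l k) by (left; lia). lra.
    - intros k Hk. rewrite Hcq by auto. destruct (IH k Hk) as [Hq _]. rewrite Hq. lra. }
  assert (Hn : nrm n B m = R' m m * R' m m).
  { rewrite nrm_eq. rewrite (rsum_ext n _ (fun l => R' m m * R' m m * (Q' l m * Q' l m))).
    rewrite rsum_scal. generalize (HQo m m ltac:(lia) ltac:(lia)). unfold mmul, mtr, idm.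
    rewrite Nat.eqb_refl. intros ->. lra. intros; rewrite Hrr; lra. }
  assert (HR := HRp m ltac:(lia)).
  assert (Hsq : sqrt (nrm n B m) = R' m m). { rewrite Hn. apply sqrt_square; lra. }
  split; [|split; auto]. intros l. rewrite q_eq, Hrr, Hsq. field; lra. rewrite Hn; nra.
Qed.

Lemma gs_eq_qf n p B Q' : supp n p B -> is_qf n p B Q' ->
  (forall i j, gs n B p i j = Q' i j) /\ POS n B p.
Proof. intros HS [HQ [R' [HR HE]]].
  assert (U := gs_uniq n p B Q' R' HS HQ HR HE p (le_n p)).
  split. intros i j. destruct (Nat.ltb_spec j p).
  rewrite gs_lt by auto. apply U; auto. rewrite gs_ge by auto. destruct HQ as [HQs _]. rewrite HQs; auto.
  intros j Hj; apply U; auto. Qed.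

Lemma qf_spec n p B Q' : supp n p B -> is_qf n p B Q' -> forall i j, qf n p B i j = Q' i j.
Proof. intros HS H i j. assert (H2 : is_qf n p B (qf n p B)).
  { unfold qf. apply epsilon_spec. exists Q'; auto. }
  destruct (gs_eq_qf _ _ _ _ HS H) as [A _]. destruct (gs_eq_qf _ _ _ _ HS H2) as [A2 _].
  rewrite <- A, <- A2. auto. Qed.


Lemma ww_diag n B m : ww n B m m = 1.
Proof. unfold ww. rewrite Nat.eqb_refl, rsum_zero. lra. intros k Hk; rewrite u_upper by auto; lra. Qed.

Lemma U_facts n p B : supp n p B -> FR n p B ->
  (forall i j, (j < i)%nat -> gsU n B p i j = 0) /\
  (forall i j, (p <= j)%nat -> gsU n B p i j = 0) /\
  (forall j, (j < p)%nat -> 0 < gsU n B p j j) /\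
  (forall j, (j < p)%nat -> rsum p (fun i => gsU n B p i j * gsU n B p i j) <= 1) /\
  (forall l j, (j < p)%nat -> gs n B p l j = rsum p (fun i => B l i * gsU n B p i j)).
Proof.
  intros HS HFR. destruct (gs_exists n p B HS HFR) as [_ [HPOS [HON HBU]]].
  split; [|split; [|split; [|split]]].
  - intros i j Hij. rewrite gsU_col. destruct (Nat.ltb j p); auto. apply u_upper; auto.
  - intros; apply gsU_ge; auto.
  - intros j Hj. rewrite gsU_lt by auto. rewrite u_eq, ww_diag.
    destruct (sqrt_sq_pos _ (HPOS j Hj)). rewrite Rmult_1_l. apply Rinv_0_lt_compat; auto.
  - intros j Hj. eapply Rle_trans; [apply (HFR (fun i => gsU n B p i j))|].
    rewrite (rsum_ext n _ (fun l => q n B j l * q n B j l)). rewrite HON by auto. rewrite Nat.eqb_refl; lra.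
    intros l Hl. rewrite (HBU j Hj l). rewrite (rsum_ext p _ (fun i => B l i * u n B j i)). auto.
    intros; rewrite gsU_lt; auto.
  - intros l j Hj. rewrite gs_lt by auto. rewrite HBU by auto. apply rsum_ext; intros; rewrite gsU_lt; auto.
Qed.

Lemma is_qf_mulU n p M Q' U : is_qf n p M Q' ->
  (forall i j, (j < i)%nat -> (i < p)%nat -> U i j = 0) ->
  (forall j, (j < p)%nat -> 0 < U j j) ->
  is_qf n p (mmul p M U) Q'.
Proof.
  intros [HQ [R' [[HRu HRp] HE]]] HUu HUp. split; auto.
  exists (mmul p R' U). split; [split|].
  - intros i j [Hji Hip]. unfold mmul. apply rsum_zero. intros k Hk.
    destruct (Nat.ltb_spec k i). rewrite HRu by lia. lra. rewrite HUu by lia. lra.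
  - intros i Hi. unfold mmul. rewrite (rsum_ext p _ (fun k => if Nat.eqb k i then R' i k * U k i else 0)).
    rewrite rsum_delta by auto. apply Rmult_lt_0_compat; auto.
    intros k Hk. destruct (Nat.eqb_spec k i). subst; auto.
    destruct (Nat.ltb_spec k i). rewrite HRu by lia. lra. rewrite HUu by lia. lra.
  - intros l j Hl Hj. unfold mmul at 1.
    rewrite (rsum_ext p _ (fun k => rsum p (fun k' => Q' l k' * R' k' k * U k j))).
    rewrite rsum_swap. unfold mmul. apply rsum_ext. intros k' Hk'. rewrite <- rsum_scal. apply rsum_ext; intros; lra.
    intros k Hk. rewrite HE by auto. unfold mmul. rewrite <- rsum_scalr. auto.
Qed.

Lemma rsum_quad n p (a b : mat) (w : nat -> R) :
  rsum n (fun l => rsum p (fun i => a l i * w i) * rsum p (fun j => b l j * w j)) =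
  rsum p (fun i => rsum p (fun j => w i * w j * rsum n (fun l => a l i * b l j))).
Proof.
  rewrite (rsum_ext n _ (fun l => rsum p (fun i => rsum p (fun j => w i * w j * (a l i * b l j))))).
  rewrite rsum_swap. apply rsum_ext; intros i Hi. rewrite rsum_swap. apply rsum_ext; intros j Hj.
  rewrite <- rsum_scal. apply rsum_ext; intros; lra.
  intros l Hl. rewrite <- rsum_scalr. apply rsum_ext; intros i Hi. rewrite <- rsum_scal. apply rsum_ext; intros; lra.
Qed.

Lemma skew_quad p (S : mat) (w : nat -> R) : (forall i j, (i < p)%nat -> (j < p)%nat -> S i j = - S j i) ->
  rsum p (fun i => rsum p (fun j => w i * w j * S i j)) = 0.
Proof. intros H.
  assert (E: rsum p (fun i => rsum p (fun j => w i * w j * S i j)) = - rsum p (fun i => rsum p (fun j => w i * w j * S i j))).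
  { rewrite rsum_swap at 1. rewrite <- rsum_opp. apply rsum_ext; intros j Hj. rewrite <- rsum_opp.
    apply rsum_ext; intros i Hi. rewrite H by auto; lra. }
  lra. Qed.

Lemma FR_tangent n p X eta tau : stiefel n p X -> tangent n p X eta ->
  FR n p (madd X (mscale tau eta)).
Proof.
  intros [HXs HXo] [Hes Het] w. unfold madd, mscale.
  rewrite (rsum_ext n _ (fun l => rsum p (fun i => X l i * w i) * rsum p (fun j => X l j * w j) +
     2 * tau * (rsum p (fun i => X l i * w i) * rsum p (fun j => eta l j * w j)) +
     tau * tau * (rsum p (fun i => eta l i * w i) * rsum p (fun j => eta l j * w j)))).
  rewrite !rsum_plus, !rsum_scal, !rsum_quad.
  rewrite (skew_quad p (fun i j => rsum n (fun l => X l i * eta l j))).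
  rewrite (rsum_ext p (fun i => rsum p (fun j => w i * w j * rsum n (fun l => X l i * X l j))) (fun i => w i * w i)).
  assert (0 <= rsum p (fun i => rsum p (fun j => w i * w j * rsum n (fun l => eta l i * eta l j)))).
  { rewrite <- rsum_quad. apply rsum_nonneg; intros. nra. }
  nra.
  - intros i Hi. rewrite (rsum_ext p _ (fun j => if Nat.eqb i j then w i * w j else 0)).
    rewrite rsum_delta' by auto. auto. intros j Hj. generalize (HXo i j Hi Hj). unfold mmul, mtr, idm.
    intros ->. destruct (Nat.eqb i j); lra.
  - intros i j Hi Hj. generalize (Het i j Hi Hj). unfold madd, mmul, mtr, mzero. intros H.
    rewrite (rsum_ext n (fun l => eta l i * X l j) (fun l => X l j * eta l i)) in H by (intros; lra). lra.
  - intros l Hl. rewrite (rsum_ext p (fun i => (X l i + tau * eta l i) * w i) (fun i => X l i * w i + tau * (eta l i * w i))) by (intros; lra).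
    rewrite rsum_plus, rsum_scal. ring.
Qed.


Fixpoint esum k (f : nat -> ex) : ex := match k with O => ECst 0 | S k' => EAdd (esum k' f) (f k') end.
Lemma ev_esum e s k f : ev e s (esum k f) = rsum k (fun i => ev e s (f i)).
Proof. induction k; simpl; auto. rewrite IHk; auto. Qed.
Lemma wf_esum e s k f : (forall i, (i < k)%nat -> wf e s (f i)) -> wf e s (esum k f).
Proof. induction k; simpl; auto. intros; split; [apply IHk; intros; apply H|apply H]; lia. Qed.
Lemma vin_esum P k f : (forall i, (i < k)%nat -> vin P (f i)) -> vin P (esum k f).
Proof. induction k; simpl; auto. intros; split; [apply IHk; intros; apply H|apply H]; lia. Qed.

Definition emat := nat -> nat -> ex.
Definition evm e s (P : emat) : mat := fun i j => ev e s (P i j).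

Definition egres n (Bx Q : emat) m i :=
  EAdd (Bx i m) (EMul (ECst (-1)) (esum m (fun k => EMul (esum n (fun l => EMul (Q l k) (Bx l m))) (Q i k)))).
Fixpoint egs n (Bx : emat) m : emat :=
  match m with
  | O => fun _ _ => ECst 0
  | S m' => fun i j => if Nat.eqb j m' then
      EMul (egres n Bx (egs n Bx m') m' i)
        (EInv (ESqrt (esum n (fun l => EMul (egres n Bx (egs n Bx m') m' l) (egres n Bx (egs n Bx m') m' l)))))
      else egs n Bx m' i j
  end.

Lemma ev_egres e s n Bx Q m i : ev e s (egres n Bx Q m i) = gres n (evm e s Bx) (evm e s Q) m i.
Proof. unfold egres, gres; simpl. rewrite ev_esum. f_equal. f_equal. apply rsum_ext; intros. simpl.
  rewrite ev_esum. reflexivity. Qed.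

Lemma ev_egs e s n Bx m : evm e s (egs n Bx m) = gs n (evm e s Bx) m.
Proof. induction m; apply functional_extensionality; intros i; apply functional_extensionality; intros j.
  reflexivity. unfold evm at 1. cbn [egs gs]. destruct (Nat.eqb j m).
  - cbn [ev]. rewrite ev_egres, ev_esum. rewrite IHm. f_equal. f_equal. f_equal. apply rsum_ext; intros.
    cbn [ev]. rewrite ev_egres, IHm. reflexivity.
  - change (evm e s (egs n Bx m) i j = gs n (evm e s Bx) m i j). rewrite IHm; reflexivity. Qed.

Lemma wf_egs e s n Bx m : (forall i j, wf e s (Bx i j)) ->
  (forall m', (m' < m)%nat -> 0 < nrm n (evm e s Bx) m') -> forall i j, wf e s (egs n Bx m i j).
Proof. intros HB. induction m; intros HP i j; simpl; auto.
  assert (IH : forall i j, wf e s (egs n Bx m i j)) by (apply IHm; intros; apply HP; lia).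
  assert (Hg : forall i, wf e s (egres n Bx (egs n Bx m) m i)).
  { intros i'. unfold egres; simpl. repeat split; auto. apply wf_esum; intros; simpl. split; auto.
    apply wf_esum; intros; simpl; auto. }
  assert (Hv : ev e s (esum n (fun l => EMul (egres n Bx (egs n Bx m) m l) (egres n Bx (egs n Bx m) m l))) = nrm n (evm e s Bx) m).
  { rewrite ev_esum. unfold nrm. apply rsum_ext; intros. cbn [ev]. rewrite ev_egres, ev_egs. reflexivity. }
  destruct (Nat.eqb j m); auto. cbn [wf ev]. rewrite Hv. assert (H := HP m ltac:(lia)).
  split; [apply Hg|]. split; [split; [apply wf_esum; intros; cbn [wf]; split; apply Hg|auto]|].
  apply Rgt_not_eq, sqrt_lt_R0; auto. Qed.

Lemma vin_egs P n Bx m : (forall i j, vin P (Bx i j)) -> forall i j, vin P (egs n Bx m i j).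
Proof. intros HB. induction m; intros i j; simpl; auto. destruct (Nat.eqb j m); auto. simpl.
  unfold egres; simpl. repeat split; auto; repeat (apply vin_esum; intros; simpl; repeat split; auto). Qed.

Definition ecostf n p (A : mat) (mu : nat -> R) (Q : emat) : ex :=
  esum p (fun i => esum p (fun l => EMul (esum n (fun m => EMul (esum n (fun a => EMul (Q a i) (ECst (A a m)))) (Q m l)))
     (ECst (diagm mu l i)))).

Lemma ev_ecostf e s n p A mu Q : ev e s (ecostf n p A mu Q) = costf n p A mu (evm e s Q).
Proof. unfold ecostf, costf, mtrace. rewrite ev_esum. apply rsum_ext; intros i Hi.
  rewrite ev_esum. unfold mmul at 1. apply rsum_ext; intros l Hl. simpl. rewrite ev_esum. f_equal.
  unfold mmul at 1. apply rsum_ext; intros m Hm. simpl. rewrite ev_esum. f_equal.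
  Qed.

Lemma wf_ecostf e s n p A mu Q : (forall i j, wf e s (Q i j)) -> wf e s (ecostf n p A mu Q).
Proof. intros H. unfold ecostf. repeat (apply wf_esum; intros; simpl; repeat split; auto). Qed.
Lemma vin_ecostf P n p A mu Q : (forall i j, vin P (Q i j)) -> vin P (ecostf n p A mu Q).
Proof. intros H. unfold ecostf. repeat (apply vin_esum; intros; simpl; repeat split; auto). Qed.

Definition Bx n p : emat := fun i j =>
  if andb (Nat.ltb i n) (Nat.ltb j p) then EAdd (EPar 0 i j) (EMul ETau (EPar 1 i j)) else ECst 0.
Definition envXY (X Y : mat) : env := fun k => match k with O => X | 1%nat => Y | _ => mzero end.
Definition ecost n p A mu := ecostf n p A mu (egs n (Bx n p) p).
Definition Pin n p : nat -> nat -> nat -> Prop := fun k i j => (k < 2)%nat /\ (i < n)%nat /\ (j < p)%nat.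

Lemma evm_Bx n p X Y s : supp n p X -> supp n p Y -> evm (envXY X Y) s (Bx n p) = madd X (mscale s Y).
Proof. intros HX HY. apply functional_extensionality; intros i; apply functional_extensionality; intros j.
  unfold evm, Bx, madd, mscale, envXY. destruct (Nat.ltb_spec i n), (Nat.ltb_spec j p); simpl;
  try (rewrite HX, HY by lia; lra). reflexivity. Qed.

Lemma ev_ecost n p A mu X Y s : supp n p X -> supp n p Y ->
  ev (envXY X Y) s (ecost n p A mu) = costf n p A mu (gs n (madd X (mscale s Y)) p).
Proof. intros. unfold ecost. rewrite ev_ecostf, ev_egs, evm_Bx; auto. Qed.

Lemma wf_ecost n p A mu X Y s : supp n p X -> supp n p Y -> POS n (madd X (mscale s Y)) p ->
  wf (envXY X Y) s (ecost n p A mu).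
Proof. intros HX HY HP. unfold ecost. apply wf_ecostf. apply wf_egs.
  intros i j; unfold Bx; destruct (andb _ _); simpl; auto.
  rewrite evm_Bx; auto. Qed.

Lemma vin_ecost n p A mu : vin (Pin n p) (ecost n p A mu).
Proof. unfold ecost. apply vin_ecostf, vin_egs. intros i j; unfold Bx, Pin.
  destruct (Nat.ltb_spec i n), (Nat.ltb_spec j p); simpl; auto; repeat split; auto; lia. Qed.


Lemma small_inv eps : 0 < eps -> exists N, forall m, (N <= m)%nat -> / (INR m + 1) < eps.
Proof. intros H. destruct (INR_archimed eps 1 H) as [N HN]. exists N. intros m Hm.
  assert (INR N <= INR m) by (apply le_INR; auto). assert (0 <= INR N) by apply pos_INR.
  apply Rmult_lt_reg_l with (INR m + 1). lra. rewrite Rinv_r by lra. nra. Qed.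

Lemma phi_ge (phi : nat -> nat) : (forall m, (phi m < phi (S m))%nat) -> forall m, (m <= phi m)%nat.
Proof. intros H m; induction m; [lia|]. specialize (H m); lia. Qed.

Lemma phi_mono (phi : nat -> nat) : (forall m, (phi m < phi (S m))%nat) -> forall a b, (a <= b)%nat -> (phi a <= phi b)%nat.
Proof. intros H a b Hab; induction Hab; auto. specialize (H m); lia. Qed.

Lemma cv_subseq u l phi : (forall m, (phi m < phi (S m))%nat) -> Un_cv u l -> Un_cv (fun m => u (phi m)) l.
Proof. intros Hp Hc eps He. destruct (Hc eps He) as [N HN]. exists N. intros m Hm.
  apply HN. generalize (phi_ge phi Hp m); lia. Qed.

Lemma bw1 (v : nat -> R) M : (forall m, Rabs (v m) <= M) ->
  exists phi a, (forall m, (phi m < phi (S m))%nat) /\ Un_cv (fun m => v (phi m)) a.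
Proof.
  intros HM. destruct (Bolzano_Weierstrass v (fun c => -M <= c <= M) (compact_P3 (-M) M)) as [a Ha].
  { intros m; specialize (HM m); unfold Rabs in HM; destruct (Rcase_abs (v m)); lra. }
  assert (pick : forall N m, exists p, (N <= p)%nat /\ Rabs (v p - a) < / (INR m + 1)).
  { intros N m. assert (Hp : 0 < / (INR m + 1)) by (apply Rinv_0_lt_compat; generalize (pos_INR m); lra).
    destruct (Ha (fun x => Rabs (x - a) < / (INR m + 1)) N) as [p [Hp1 Hp2]].
    exists (mkposreal _ Hp). intros x Hx. unfold disc in Hx. simpl in Hx. auto.
    exists p; auto. }
  set (pf := fun N m => proj1_sig (constructive_indefinite_description _ (pick N m))).
  assert (Hpf : forall N m, (N <= pf N m)%nat /\ Rabs (v (pf N m) - a) < / (INR m + 1)).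
  { intros; unfold pf; destruct (constructive_indefinite_description _ _); auto. }
  set (phi := fix phi m := match m with O => pf O O | S m' => pf (S (phi m')) (S m') end).
  assert (H1 : forall m, (phi m < phi (S m))%nat).
  { intros m. change (phi m < pf (S (phi m)) (S m))%nat. destruct (Hpf (S (phi m)) (S m)); lia. }
  assert (H2 : forall m, Rabs (v (phi m) - a) < / (INR m + 1)).
  { intros [|m]. apply Hpf. apply (Hpf (S (phi m)) (S m)). }
  exists phi, a. split; auto. intros eps He. destruct (small_inv eps He) as [N HN].
  exists N. intros m Hm. unfold Rdist. eapply Rlt_trans; [apply H2|]. apply HN; lia.
Qed.

Definition tr := (nat * nat * nat)%type.
Definition tdec (x y : tr) : {x = y} + {x <> y}.
Proof. decide equality; try apply Nat.eq_dec. destruct a, p; decide equality; apply Nat.eq_dec. Defined.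

Lemma bw_list (l : list tr) (u : nat -> env) M :
  (forall m k i j, In (k, i, j) l -> Rabs (u m k i j) <= M) ->
  exists phi, (forall m, (phi m < phi (S m))%nat) /\ exists e : env,
    (forall k i j, In (k, i, j) l -> Un_cv (fun m => u (phi m) k i j) (e k i j)) /\
    (forall k i j, ~ In (k, i, j) l -> e k i j = 0).
Proof.
  induction l as [|[[k0 i0] j0] l IH]; intros HM.
  - exists (fun m => m). split; [intros; lia|]. exists (fun _ _ _ => 0). split; [intros; simpl in *; tauto|auto].
  - destruct IH as [phi1 [Hp1 [e1 [He1 He1']]]]. { intros; apply HM; simpl; auto. }
    destruct (bw1 (fun m => u (phi1 m) k0 i0 j0) M) as [phi2 [a [Hp2 Ha]]].
    { intros; apply HM; simpl; auto. }
    exists (fun m => phi1 (phi2 m)). split.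
    { intros m. assert (phi2 m < phi2 (S m))%nat by apply Hp2.
      assert (phi1 (S (phi2 m)) <= phi1 (phi2 (S m)))%nat by (apply phi_mono; auto).
      specialize (Hp1 (phi2 m)). lia. }
    exists (fun k i j => if tdec (k, i, j) (k0, i0, j0) then a else e1 k i j). split.
    + intros k i j Hin. destruct (tdec (k, i, j) (k0, i0, j0)) as [E|E].
      inversion E; subst. auto.
      destruct Hin as [Hin|Hin]. congruence.
      apply (cv_subseq (fun m => u (phi1 m) k i j)); auto.
    + intros k i j Hn. destruct (tdec (k, i, j) (k0, i0, j0)) as [E|E].
      exfalso; apply Hn; simpl; auto. apply He1'. intros H; apply Hn; simpl; auto.
Qed.

Lemma cv_bounded u l : Un_cv u l -> exists N, forall m, (N <= m)%nat -> Rabs (u m) <= Rabs l + 1.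
Proof. intros H. destruct (H 1 Rlt_0_1) as [N HN]. exists N. intros m Hm. specialize (HN m Hm).
  unfold Rdist in HN. generalize (Rabs_triang_inv (u m) l). lra. Qed.

Lemma compact_bound (l : list tr) (S : env -> Prop) (h : env -> R) M :
  (forall e, S e -> forall k i j, In (k, i, j) l -> Rabs (e k i j) <= M) ->
  (forall (es : nat -> env) e, (forall m, S (es m)) ->
     (forall k i j, In (k, i, j) l -> Un_cv (fun m => es m k i j) (e k i j)) ->
     (forall k i j, ~ In (k, i, j) l -> e k i j = 0) ->
     S e /\ Un_cv (fun m => h (es m)) (h e)) ->
  exists C, forall e, S e -> Rabs (h e) <= C.
Proof.
  intros HM HC. apply NNPP. intros Hn.
  assert (Hx : forall m : nat, exists e, S e /\ INR m < Rabs (h e)).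
  { intros m. apply NNPP; intros H. apply Hn. exists (INR m). intros e He.
    apply Rnot_lt_le. intros H'. apply H. exists e; auto. }
  set (es := fun m => proj1_sig (constructive_indefinite_description _ (Hx m))).
  assert (Hes : forall m, S (es m) /\ INR m < Rabs (h (es m))).
  { intros; unfold es; destruct (constructive_indefinite_description _ _); auto. }
  destruct (bw_list l es M) as [phi [Hp [e [He1 He2]]]].
  { intros; apply HM; auto. apply Hes. }
  destruct (HC (fun m => es (phi m)) e) as [HSe Hcv]; auto. intros; apply Hes.
  destruct (cv_bounded _ _ Hcv) as [N HN].
  destruct (INR_archimed 1 (Rabs (h e) + 1)) as [K HK]. lra.
  assert (HH := HN (max N K) ltac:(lia)). destruct (Hes (phi (max N K))) as [_ Hb].
  assert (INR K <= INR (phi (max N K))). { apply le_INR. generalize (phi_ge phi Hp (max N K)); lia. }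
  lra.
Qed.

Lemma CV_rsum k (f : nat -> nat -> R) (g : nat -> R) :
  (forall i, (i < k)%nat -> Un_cv (fun m => f m i) (g i)) ->
  Un_cv (fun m => rsum k (f m)) (rsum k g).
Proof. induction k; simpl; intros H. apply CV_const. apply CV_plus. apply IHk; intros; apply H; lia. apply H; lia. Qed.

Lemma CV_le_bound u l M : (forall m, Rabs (u m) <= M) -> Un_cv u l -> Rabs l <= M.
Proof. intros Hb Hc. apply Rnot_lt_le; intros H. destruct (Hc (Rabs l - M)) as [N HN]. lra.
  specialize (HN N (le_n N)). specialize (Hb N). unfold Rdist in HN.
  generalize (Rabs_triang_inv l (u N)). rewrite Rabs_minus_sym in HN. lra. Qed.

Lemma CV_unique u l1 l2 : Un_cv u l1 -> Un_cv u l2 -> l1 = l2.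
Proof. intros H1 H2. apply UL_sequence with u; auto. Qed.

Lemma CV_eq_const u l c : (forall m, u m = c) -> Un_cv u l -> l = c.
Proof. intros H1 H2. apply (CV_unique u); auto. intros eps He; exists 0%nat; intros; unfold Rdist; rewrite H1.
  rewrite Rminus_diag, Rabs_R0; auto. Qed.

Lemma eventually_all (l : list tr) (es : nat -> env) (e : env) delta : 0 < delta ->
  (forall k i j, In (k, i, j) l -> Un_cv (fun m => es m k i j) (e k i j)) ->
  exists N, forall m, (N <= m)%nat -> forall k i j, In (k, i, j) l -> Rabs (es m k i j - e k i j) < delta.
Proof. intros Hd. induction l as [|[[k0 i0] j0] l IH]; intros H.
  - exists 0%nat; intros; simpl in *; tauto.
  - destruct IH as [N1 HN1]. intros; apply H; simpl; auto.
    destruct (H k0 i0 j0 (or_introl eq_refl) delta Hd) as [N2 HN2].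
    exists (max N1 N2). intros m Hm k i j [Hin|Hin].
    inversion Hin; subst. apply HN2; lia. apply HN1; auto; lia. Qed.

Definition idx (K N M : nat) : list tr := list_prod (list_prod (seq 0 K) (seq 0 N)) (seq 0 M).
Lemma in_idx K N M k i j : In (k, i, j) (idx K N M) <-> (k < K)%nat /\ (i < N)%nat /\ (j < M)%nat.
Proof. unfold idx. rewrite !in_prod_iff, !in_seq. lia. Qed.


Lemma shift f x l : derivable_pt_lim f x l -> derivable_pt_lim (fun h => f (x + h)) 0 l.
Proof. intros H eps He. destruct (H eps He) as [d Hd]. exists d. intros h H1 H2.
  replace (x + (0 + h)) with (x + h) by ring. replace (x + 0) with x by ring. apply Hd; auto. Qed.

Lemma mat_ext (A B : mat) : (forall i j, A i j = B i j) -> A = B.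
Proof. intros H; apply functional_extensionality; intros i; apply functional_extensionality; auto. Qed.

Lemma abs_le1 x : x * x <= 1 -> Rabs x <= 1.
Proof. intros H. unfold Rabs; destruct (Rcase_abs x); nra. Qed.
Lemma abs_le_sq x : Rabs x <= 1 + x * x.
Proof. unfold Rabs; destruct (Rcase_abs x); nra. Qed.

Lemma rsum_abs k f : Rabs (rsum k f) <= rsum k (fun i => Rabs (f i)).
Proof. induction k; simpl. rewrite Rabs_R0; lra. eapply Rle_trans; [apply Rabs_triang|]. lra. Qed.

Definition sq n p (eta : mat) := rsum n (fun i => rsum p (fun j => eta i j * eta i j)).

Lemma sq_term n p eta i j : (i < n)%nat -> (j < p)%nat -> eta i j * eta i j <= sq n p eta.
Proof. intros. unfold sq. eapply Rle_trans; [|apply (rsum_term_le n (fun i => rsum p (fun j => eta i j * eta i j)) i); auto].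
  apply (rsum_term_le p (fun j => eta i j * eta i j)); auto; intros; nra.
  intros; apply rsum_nonneg; intros; nra. Qed.

Lemma stiefel_le1 n p X i j : stiefel n p X -> Rabs (X i j) <= 1.
Proof. intros [HS HO]. destruct (Nat.ltb_spec i n), (Nat.ltb_spec j p);
  try (rewrite HS by lia; rewrite Rabs_R0; lra).
  apply abs_le1. generalize (HO j j H0 H0). unfold mmul, mtr, idm. rewrite Nat.eqb_refl. intros E.
  rewrite <- E. apply (rsum_term_le n (fun l => X l j * X l j)); auto; intros; nra. Qed.

Lemma POS_stiefel n p Y : stiefel n p Y -> POS n Y p.
Proof. intros HY. assert (HS : supp n p Y) by apply HY.
  assert (H : is_qf n p Y Y).
  { split; auto. exists idm. split; [split|].
    - intros i j Hij. unfold idm. destruct (Nat.eqb_spec i j); [lia|auto].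
    - intros i Hi. unfold idm. rewrite Nat.eqb_refl. lra.
    - intros i j Hi Hj. unfold mmul, idm.
      rewrite (rsum_ext p _ (fun k => if Nat.eqb k j then Y i k else 0)). rewrite rsum_delta; auto.
      intros k Hk. destruct (Nat.eqb k j); lra. }
  apply (gs_eq_qf n p Y Y HS H). Qed.

Lemma is_qf_meq n p B1 B2 Q : meq n p B1 B2 -> is_qf n p B1 Q -> is_qf n p B2 Q.
Proof. intros HE [HQ [R' [HR HE']]]. split; auto. exists R'. split; auto. intros i j Hi Hj.
  rewrite <- HE by auto. auto. Qed.

Lemma supp_madd n p X Y u : supp n p X -> supp n p Y -> supp n p (madd X (mscale u Y)).
Proof. intros HX HY i j H. unfold madd, mscale. rewrite HX, HY by auto. lra. Qed.

Lemma qf_gs_full n p B : supp n p B -> FR n p B -> qf n p B = gs n B p.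
Proof. intros HS HF. apply mat_ext. intros i j. destruct (gs_exists n p B HS HF) as [H _].
  apply qf_spec; auto. Qed.

Lemma Gc_seq n p (F : mat -> R) (Xs : nat -> mat) (X : mat) : mat_continuous n p F ->
  (forall i j, (i < n)%nat -> (j < p)%nat -> Un_cv (fun m => Xs m i j) (X i j)) ->
  Un_cv (fun m => F (Xs m)) (F X).
Proof. intros HF HX eps He. destruct (HF X eps He) as [d [Hd Hd']].
  destruct (eventually_all (idx 1 n p) (fun m _ => Xs m) (fun _ => X) d Hd) as [N HN].
  { intros k i j Hin. apply in_idx in Hin. apply HX; lia. }
  exists N. intros m Hm. unfold Rdist. apply Hd'. intros i j Hi Hj.
  apply (HN m Hm 0%nat i j). apply in_idx; lia. Qed.

Lemma env_XY (e : env) : (forall k i j, (2 <= k)%nat -> e k i j = 0) -> e = envXY (e 0%nat) (e 1%nat).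
Proof. intros H. apply functional_extensionality; intros k. destruct k as [|[|k]]; auto.
  simpl. apply mat_ext; intros; apply H; lia. Qed.


Definition Gsum n p (Gc : nat -> nat -> nat -> nat -> mat -> R) (X eta : mat) :=
  rsum n (fun i => rsum p (fun j => rsum n (fun k => rsum p (fun l => Gc i j k l X * eta i j * eta k l)))).

Lemma Gsum_scal n p Gc X eta c : Gsum n p Gc X (mscale c eta) = c * c * Gsum n p Gc X eta.
Proof. unfold Gsum. rewrite <- rsum_scal; apply rsum_ext; intros; rewrite <- rsum_scal; apply rsum_ext; intros;
  rewrite <- rsum_scal; apply rsum_ext; intros; rewrite <- rsum_scal; apply rsum_ext; intros; unfold mscale; ring. Qed.

Lemma sq_scal n p eta c : sq n p (mscale c eta) = c * c * sq n p eta.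
Proof. unfold sq. rewrite <- rsum_scal; apply rsum_ext; intros; rewrite <- rsum_scal; apply rsum_ext; intros;
  unfold mscale; ring. Qed.

Lemma tangent_scal n p X eta c : tangent n p X eta -> tangent n p X (mscale c eta).
Proof. intros [HS HT]. split. intros i j H; unfold mscale; rewrite HS; auto; lra.
  intros i j Hi Hj. generalize (HT i j Hi Hj). unfold madd, mmul, mtr, mzero, mscale. intros E.
  rewrite (rsum_ext n (fun l => X l i * (c * eta l j)) (fun l => c * (X l i * eta l j))) by (intros; ring).
  rewrite (rsum_ext n (fun l => c * eta l i * X l j) (fun l => c * (eta l i * X l j))) by (intros; ring).
  rewrite !rsum_scal. nra. Qed.

Lemma CV_Gsum n p Gc (Xs es : nat -> mat) X eta :
  (forall i j k l, mat_continuous n p (Gc i j k l)) ->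
  (forall i j, (i < n)%nat -> (j < p)%nat -> Un_cv (fun m => Xs m i j) (X i j)) ->
  (forall i j, (i < n)%nat -> (j < p)%nat -> Un_cv (fun m => es m i j) (eta i j)) ->
  Un_cv (fun m => Gsum n p Gc (Xs m) (es m)) (Gsum n p Gc X eta).
Proof. intros HG HX He. unfold Gsum.
  apply CV_rsum; intros; apply CV_rsum; intros; apply CV_rsum; intros; apply CV_rsum; intros.
  apply CV_mult; [apply CV_mult; [apply (Gc_seq n p); auto|auto]|auto]. Qed.

Lemma metric_bound n p g : riemannian_metric n p g -> exists K, 0 < K /\
  forall X eta, stiefel n p X -> tangent n p X eta -> g X eta eta = 1 -> forall i j, Rabs (eta i j) <= K.
Proof.
  intros [Hpd [Gc [HGs HGf]]].
  assert (HGc : forall i j k l, mat_continuous n p (Gc i j k l)) by (intros; apply (HGs i j k l 0%nat)).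
  set (S1 := fun e : env => stiefel n p (e 0%nat) /\ tangent n p (e 0%nat) (e 1%nat) /\ sq n p (e 1%nat) = 1 /\
          (forall k i j, (2 <= k)%nat -> e k i j = 0)).
  assert (Hpos : forall X eta, stiefel n p X -> tangent n p X eta -> sq n p eta <> 0 -> 0 < Gsum n p Gc X eta).
  { intros X eta HX Ht Hsq. unfold Gsum. rewrite <- HGf by auto. apply Hpd; auto.
    apply NNPP; intros Hn. apply Hsq. unfold sq. apply rsum_zero; intros i Hi; apply rsum_zero; intros j Hj.
    destruct (Req_dec (eta i j) 0) as [E|E]. rewrite E; lra. exfalso; apply Hn; eauto. }
  destruct (compact_bound (idx 2 n p) S1 (fun e => / Gsum n p Gc (e 0%nat) (e 1%nat)) 1) as [C HC].
  - intros e [HX [Ht [Hs _]]] k i j Hin. apply in_idx in Hin. destruct Hin as [Hk [Hi Hj]].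
    destruct k as [|[|k]]; [|apply abs_le1; rewrite <- Hs; apply sq_term; auto|lia].
    apply (stiefel_le1 n p); auto.
  - intros es e HS Hcv Hz.
    assert (Hc0 : forall i j, (i < n)%nat -> (j < p)%nat -> Un_cv (fun m => es m 0%nat i j) (e 0%nat i j)).
    { intros; apply Hcv; apply in_idx; lia. }
    assert (Hc1 : forall i j, (i < n)%nat -> (j < p)%nat -> Un_cv (fun m => es m 1%nat i j) (e 1%nat i j)).
    { intros; apply Hcv; apply in_idx; lia. }
    assert (Hz' : forall k i j, ((2 <= k)%nat \/ (n <= i)%nat \/ (p <= j)%nat) -> e k i j = 0).
    { intros; apply Hz. rewrite in_idx; lia. }
    assert (HSe : S1 e).
    { split; [split|split; [split|split]].
      - intros i j H; apply Hz'; lia.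
      - intros i j Hi Hj. unfold mmul, mtr.
        apply (CV_eq_const (fun m => rsum n (fun l => es m 0%nat l i * es m 0%nat l j))).
        intros m. destruct (HS m) as [[_ HO] _]. generalize (HO i j Hi Hj); unfold mmul, mtr; auto.
        apply CV_rsum; intros; apply CV_mult; auto.
      - intros i j H; apply Hz'; lia.
      - intros i j Hi Hj. unfold madd, mmul, mtr.
        apply (CV_eq_const (fun m => rsum n (fun l => es m 0%nat l i * es m 1%nat l j) + rsum n (fun l => es m 1%nat l i * es m 0%nat l j))).
        intros m. destruct (HS m) as [_ [[_ HT] _]]. generalize (HT i j Hi Hj); unfold madd, mmul, mtr; auto.
        apply CV_plus; apply CV_rsum; intros; apply CV_mult; auto.
      - apply (CV_eq_const (fun m => sq n p (es m 1%nat))). intros m; apply (HS m).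
        unfold sq. apply CV_rsum; intros; apply CV_rsum; intros; apply CV_mult; auto.
      - intros; apply Hz'; lia. }
    split; auto. apply CV_inv. apply CV_Gsum; auto.
    destruct HSe as [HX [Ht [Hs _]]]. apply Rgt_not_eq, Hpos; auto. lra.
  - exists (1 + Rabs C). assert (HC0 : C <= Rabs C) by apply RRle_abs.
    assert (0 <= Rabs C) by apply Rabs_pos.
    split; [lra|]. intros X eta HX Ht Hg i j.
    assert (Hg' : Gsum n p Gc X eta = 1) by (unfold Gsum; rewrite <- HGf; auto).
    assert (Ha : 0 < sq n p eta).
    { assert (0 <= sq n p eta) by (unfold sq; apply rsum_nonneg; intros; apply rsum_nonneg; intros; nra).
      destruct (Req_dec (sq n p eta) 0) as [E|E]; [|lra]. exfalso.
      assert (Gsum n p Gc X eta = 0); [|lra].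
      assert (Hz : forall i j, (i < n)%nat -> (j < p)%nat -> eta i j = 0).
      { intros a b Ha Hb. generalize (sq_term n p eta a b Ha Hb). rewrite E. intros. nra. }
      unfold Gsum. apply rsum_zero; intros; apply rsum_zero; intros. apply rsum_zero; intros; apply rsum_zero; intros.
      rewrite Hz by auto. ring. }
    destruct (sqrt_sq_pos _ Ha) as [Hs1 Hs2]. set (s := sqrt (sq n p eta)) in *.
    set (eta' := mscale (/ s) eta).
    assert (H1 : S1 (envXY X eta')).
    { split; [auto|split; [apply tangent_scal; auto|split]].
      - simpl. unfold eta'. rewrite sq_scal. rewrite <- Hs2. field. lra.
      - intros [|[|k]] a b Hk; simpl; [lia|lia|reflexivity]. }
    specialize (HC _ H1). simpl in HC. unfold eta' in HC. rewrite Gsum_scal, Hg' in HC.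
    replace (/ (/ s * / s * 1)) with (s * s) in HC by (field; lra).
    rewrite Hs2 in HC. rewrite Rabs_right in HC by lra.
    eapply Rle_trans; [apply abs_le_sq|].
    destruct (Nat.ltb_spec i n), (Nat.ltb_spec j p).
    + generalize (sq_term n p eta i j ltac:(assumption) ltac:(assumption)). lra.
    + destruct Ht as [HS _]. rewrite HS by lia. lra.
    + destruct Ht as [HS _]. rewrite HS by lia. lra.
    + destruct Ht as [HS _]. rewrite HS by lia. lra.
Qed.


Lemma sqrt_eq1 x : sqrt x = 1 -> x = 1.
Proof. intros H. destruct (Rle_lt_dec 0 x). rewrite <- (sqrt_sqrt x) by auto. rewrite H; lra.
  rewrite sqrt_neg_0 in H by lra. lra. Qed.

Lemma stiefel_closed n p (es : nat -> env) (e : env) :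
  (forall m, stiefel n p (es m 0%nat)) ->
  (forall i j, (i < n)%nat -> (j < p)%nat -> Un_cv (fun m => es m 0%nat i j) (e 0%nat i j)) ->
  (forall i j, (n <= i)%nat \/ (p <= j)%nat -> e 0%nat i j = 0) ->
  stiefel n p (e 0%nat).
Proof. intros HS Hc Hz. split; auto. intros i j Hi Hj. unfold mmul, mtr.
  apply (CV_eq_const (fun m => rsum n (fun l => es m 0%nat l i * es m 0%nat l j))).
  intros m. destruct (HS m) as [_ HO]. generalize (HO i j Hi Hj); unfold mmul, mtr; auto.
  apply CV_rsum; intros; apply CV_mult; auto. Qed.

Lemma part1 n p A mu g : riemannian_metric n p g ->
     exists L, 0 < L /\
       forall (X eta : mat) (t : R),
         stiefel n p X -> tangent n p X eta -> sqrt (g X eta eta) = 1 -> 0 <= t ->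
         exists d1 d0 : R,
           derivable_pt_lim
             (fun s => costf n p A mu (qr_retr n p X (madd (mscale t eta) (mscale s eta)))) 0 d1 /\
           derivable_pt_lim
             (fun s => costf n p A mu (qr_retr n p X (mscale s eta))) 0 d0 /\
           Rabs (d1 - d0) <= L * t.
Proof.
  intros Hg. destruct (metric_bound n p g Hg) as [K [HK HKb]].
  set (MZ := INR p * K). assert (HMZ : 0 <= MZ) by (unfold MZ; generalize (pos_INR p); nra).
  set (S2 := fun e : env => stiefel n p (e 0%nat) /\ supp n p (e 1%nat) /\ (forall i j, Rabs (e 1%nat i j) <= MZ) /\
     (forall k i j, (2 <= k)%nat -> e k i j = 0)).
  set (DDc := D (D (ecost n p A mu))).
  destruct (compact_bound (idx 2 n p) S2 (fun e => ev e 0 DDc) (1 + MZ)) as [C2 HC2].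
  - intros e [HX [_ [Hb _]]] k i j Hin. apply in_idx in Hin. destruct Hin as [Hk [Hi Hj]].
    destruct k as [|[|k]]; [|generalize (Hb i j); lra|lia].
    generalize (stiefel_le1 n p (e 0%nat) i j HX); lra.
  - intros es e HS Hcv Hz.
    assert (Hz' : forall k i j, ((2 <= k)%nat \/ (n <= i)%nat \/ (p <= j)%nat) -> e k i j = 0).
    { intros; apply Hz. rewrite in_idx; lia. }
    assert (HSe : S2 e).
    { split; [|split; [|split]].
      - apply (stiefel_closed n p es e). intros m; apply (HS m). intros; apply Hcv; apply in_idx; lia.
        intros; apply Hz'; lia.
      - intros i j H; apply Hz'; lia.
      - intros i j. destruct (Nat.ltb_spec i n), (Nat.ltb_spec j p);
          try (rewrite Hz' by lia; rewrite Rabs_R0; auto).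
        apply (CV_le_bound (fun m => es m 1%nat i j)). intros m; apply (HS m). apply Hcv; apply in_idx; lia.
      - intros; apply Hz'; lia. }
    split; auto.
    assert (Hwf : wf e 0 DDc).
    { unfold DDc. apply wf_D, wf_D. destruct HSe as [HX [HZ [_ H2]]].
      rewrite (env_XY e H2). apply wf_ecost; auto. apply HX.
      replace (madd (e 0%nat) (mscale 0 (e 1%nat))) with (e 0%nat).
      apply POS_stiefel; auto. apply mat_ext; intros; unfold madd, mscale; ring. }
    apply (ev_cont (Pin n p) e 0 DDc es (fun _ => 0)); auto.
    unfold DDc; apply vin_D, vin_D, vin_ecost.
    intros k i j Hp. apply Hcv. apply in_idx. unfold Pin in Hp; lia.
    apply CV_const.
  - exists (Rabs C2 + 1). split. generalize (Rabs_pos C2); lra.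
    intros X eta t HX Ht Hg1 Ht0. apply sqrt_eq1 in Hg1.
    assert (Heta := HKb X eta HX Ht Hg1).
    assert (HXs : supp n p X) by apply HX. assert (Hes : supp n p eta) by apply Ht.
    set (F := fun u => costf n p A mu (qf n p (madd X (mscale u eta)))).
    set (phi := fun u => ev (envXY X eta) u (D (ecost n p A mu))).
    assert (HPOS1 : forall u, POS n (madd X (mscale u eta)) p).
    { intros u. apply (gs_exists n p); [apply supp_madd; auto|apply FR_tangent; auto]. }
    assert (HFe : forall u, F u = ev (envXY X eta) u (ecost n p A mu)).
    { intros u. unfold F. rewrite qf_gs_full by (try apply supp_madd; auto; apply FR_tangent; auto).
      rewrite ev_ecost; auto. }
    assert (HdF : forall u, derivable_pt_lim F u (phi u)).
    { intros u. eapply (dpl_ext (fun u => ev (envXY X eta) u (ecost n p A mu))). apply ev_deriv.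
      apply wf_ecost; auto. intros; rewrite HFe; auto. reflexivity. }
    assert (Hkey : forall tau, derivable_pt_lim phi tau (ev (envXY X eta) tau DDc) /\
                               Rabs (ev (envXY X eta) tau DDc) <= C2).
    { intros tau. split.
      { apply ev_deriv. apply wf_D, wf_ecost; auto. }
      set (B := madd X (mscale tau eta)).
      assert (HBs : supp n p B) by (apply supp_madd; auto).
      assert (HBf : FR n p B) by (apply FR_tangent; auto).
      destruct (U_facts n p B HBs HBf) as [U1 [U2 [U3 [U4 U5]]]].
      destruct (gs_exists n p B HBs HBf) as [HqfB _].
      set (Y := gs n B p) in *. set (U := gsU n B p) in *. set (Z := mmul p eta U).
      assert (HY : stiefel n p Y) by apply HqfB.
      assert (HYs : supp n p Y) by apply HY.
      assert (HZs : supp n p Z).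
      { intros i j [Hi|Hj]; unfold Z, mmul; apply rsum_zero; intros k Hk.
        rewrite Hes by auto; lra. rewrite U2 by auto; lra. }
      assert (HU1 : forall k j, Rabs (U k j) <= 1).
      { intros k j. destruct (Nat.ltb_spec j p), (Nat.ltb_spec k p).
        - apply abs_le1. eapply Rle_trans; [|apply (U4 j); auto].
          apply (rsum_term_le p (fun i => U i j * U i j)); auto; intros; nra.
        - rewrite U1 by lia. rewrite Rabs_R0; lra.
        - rewrite U2 by lia. rewrite Rabs_R0; lra.
        - rewrite U2 by lia. rewrite Rabs_R0; lra. }
      assert (HZb : forall i j, Rabs (Z i j) <= MZ).
      { intros i j. unfold Z, mmul. eapply Rle_trans; [apply rsum_abs|].
        apply Rle_trans with (rsum p (fun _ => K)).
        apply rsum_le; intros k Hk. rewrite Rabs_mult.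
        generalize (Heta i k) (HU1 k j) (Rabs_pos (eta i k)) (Rabs_pos (U k j)); nra.
        unfold MZ. clear. right. induction p; cbn [rsum]. simpl; lra. rewrite IHp, S_INR. lra. }
      assert (Hqf : forall s, is_qf n p (madd Y (mscale s Z)) (gs n (madd X (mscale (tau + s) eta)) p)).
      { intros s. set (M := madd X (mscale (tau + s) eta)).
        assert (HMs : supp n p M) by (apply supp_madd; auto).
        destruct (gs_exists n p M HMs (FR_tangent n p X eta (tau + s) HX Ht)) as [HqM _].
        apply (is_qf_meq n p (mmul p M U)).
        - intros i j Hi Hj. unfold M, Y, Z, madd, mscale, mmul. rewrite U5 by auto. fold U.
          rewrite <- rsum_scal, <- rsum_plus. apply rsum_ext; intros. unfold B, madd, mscale. ring.
        - apply is_qf_mulU; auto. }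
      assert (HG : forall s, F (tau + s) = ev (envXY Y Z) s (ecost n p A mu) /\ POS n (madd Y (mscale s Z)) p).
      { intros s. destruct (gs_eq_qf n p _ _ (supp_madd n p Y Z s HYs HZs) (Hqf s)) as [E1 E2].
        split; auto. rewrite ev_ecost by auto. rewrite (mat_ext _ _ E1). unfold F.
        rewrite qf_gs_full; auto. apply supp_madd; auto. apply FR_tangent; auto. }
      assert (Hphi2 : forall s, phi (tau + s) = ev (envXY Y Z) s (D (ecost n p A mu))).
      { intros s. apply (uniqueness_limite (fun h => F (tau + s + h)) 0).
        apply shift; auto.
        eapply (dpl_ext (fun h => ev (envXY Y Z) (s + h) (ecost n p A mu))).
        apply (shift (fun u => ev (envXY Y Z) u (ecost n p A mu))). apply ev_deriv.
        apply wf_ecost; auto. apply HG.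
        intros h. replace (tau + s + h) with (tau + (s + h)) by ring. symmetry; apply HG. reflexivity. }
      assert (Heq : ev (envXY X eta) tau DDc = ev (envXY Y Z) 0 DDc).
      { apply (uniqueness_limite (fun h => phi (tau + h)) 0).
        apply shift. apply ev_deriv. apply wf_D, wf_ecost; auto.
        eapply (dpl_ext (fun h => ev (envXY Y Z) h (D (ecost n p A mu)))).
        apply ev_deriv. apply wf_D, wf_ecost; auto. apply HG.
        intros; symmetry; apply Hphi2. reflexivity. }
      rewrite Heq. apply (HC2 (envXY Y Z)). split; [auto|split; [auto|split; [auto|]]].
      intros [|[|k]] i j Hk; simpl; [lia|lia|reflexivity]. }
    exists (phi t), (phi 0). split; [|split].
    + eapply (dpl_ext (fun h => F (t + h))). apply shift; auto.
      intros h. unfold F, qr_retr. f_equal. f_equal. apply mat_ext; intros; unfold madd, mscale; ring. reflexivity.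
    + eapply (dpl_ext F). auto. intros; reflexivity. reflexivity.
    + destruct (MVT_abs phi (fun c => ev (envXY X eta) c DDc) 0 t) as [c [Hc1 Hc2]].
      { intros c _. apply Hkey. }
      rewrite Hc1. rewrite Rminus_0_r, (Rabs_right t) by lra.
      generalize (proj2 (Hkey c)) (RRle_abs C2). nra.
Qed.


Lemma poly_Ck n p k : (0 < n)%nat -> (0 < p)%nat -> forall a b c,
  mat_Ck n p k (fun X => a + b * X 0%nat 0%nat + c * (X 0%nat 0%nat * X 0%nat 0%nat)).
Proof.
  intros Hn Hp. assert (Hcont : forall a b c, mat_continuous n p (fun X => a + b * X 0%nat 0%nat + c * (X 0%nat 0%nat * X 0%nat 0%nat))).
  { intros a b c X eps He. set (x := X 0%nat 0%nat).
    set (W := Rabs b + Rabs c * (2 * Rabs x + 1) + 1).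
    assert (HW : 1 <= W) by (unfold W; generalize (Rabs_pos b) (Rabs_pos c) (Rabs_pos x); nra).
    exists (Rmin 1 (eps / W)). split. apply Rmin_pos; [lra|]. apply Rdiv_lt_0_compat; lra.
    intros Y HY. specialize (HY 0%nat 0%nat Hn Hp). set (y := Y 0%nat 0%nat) in *. fold x in HY.
    assert (Hd1 : Rabs (y - x) < 1) by (eapply Rlt_le_trans; [apply HY|apply Rmin_l]).
    assert (Hd2 : Rabs (y - x) < eps / W) by (eapply Rlt_le_trans; [apply HY|apply Rmin_r]).
    replace (a + b * y + c * (y * y) - (a + b * x + c * (x * x))) with ((y - x) * (b + c * (y + x))) by ring.
    rewrite Rabs_mult.
    assert (Hb : Rabs (b + c * (y + x)) <= W - 1).
    { eapply Rle_trans; [apply Rabs_triang|]. rewrite Rabs_mult.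
      assert (Rabs (y + x) <= 2 * Rabs x + 1).
      { eapply Rle_trans; [apply Rabs_triang|]. replace y with ((y - x) + x) by ring.
        generalize (Rabs_triang (y - x) x). lra. }
      unfold W. generalize (Rabs_pos c). nra. }
    apply Rle_lt_trans with (Rabs (y - x) * W).
    apply Rmult_le_compat_l. apply Rabs_pos. lra.
    apply Rlt_le_trans with (eps / W * W). apply Rmult_lt_compat_r; lra.
    right; field; lra. }
  induction k; intros a b c; simpl; [apply Hcont|]. split; [apply Hcont|].
  intros i j Hi Hj. destruct (Nat.eq_dec i 0), (Nat.eq_dec j 0); subst.
  - exists (fun X => b + (2 * c) * X 0%nat 0%nat + 0 * (X 0%nat 0%nat * X 0%nat 0%nat)). split; [|apply IHk].
    intros X. set (x := X 0%nat 0%nat).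
    set (ee := EAdd (EAdd (ECst a) (EMul (ECst b) (EAdd (ECst x) ETau)))
                    (EMul (ECst c) (EMul (EAdd (ECst x) ETau) (EAdd (ECst x) ETau)))).
    eapply (dpl_ext (fun s => ev (fun _ _ _ => 0) s ee)). apply ev_deriv. simpl; tauto.
    intros s. simpl. unfold madd, mscale, elem. simpl. fold x. ring.
    simpl. fold x. ring.
  - exists (fun X => 0 + 0 * X 0%nat 0%nat + 0 * (X 0%nat 0%nat * X 0%nat 0%nat)). split; [|apply IHk].
    intros X. eapply (dpl_ext (fct_cte (a + b * X 0%nat 0%nat + c * (X 0%nat 0%nat * X 0%nat 0%nat)))).
    apply derivable_pt_lim_const. intros s. unfold fct_cte, madd, mscale, elem.
    destruct (Nat.eqb_spec 0 j); [lia|]. simpl. ring. ring.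
  - exists (fun X => 0 + 0 * X 0%nat 0%nat + 0 * (X 0%nat 0%nat * X 0%nat 0%nat)). split; [|apply IHk].
    intros X. eapply (dpl_ext (fct_cte (a + b * X 0%nat 0%nat + c * (X 0%nat 0%nat * X 0%nat 0%nat)))).
    apply derivable_pt_lim_const. intros s. unfold fct_cte, madd, mscale, elem.
    destruct (Nat.eqb_spec 0 i); [lia|]. simpl. ring. ring.
  - exists (fun X => 0 + 0 * X 0%nat 0%nat + 0 * (X 0%nat 0%nat * X 0%nat 0%nat)). split; [|apply IHk].
    intros X. eapply (dpl_ext (fct_cte (a + b * X 0%nat 0%nat + c * (X 0%nat 0%nat * X 0%nat 0%nat)))).
    apply derivable_pt_lim_const. intros s. unfold fct_cte, madd, mscale, elem.
    destruct (Nat.eqb_spec 0 i); [lia|]. simpl. ring. ring.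
Qed.

Definition gS n (X xi eta : mat) : R :=
  sphere_metric n (fun i => X i 0%nat) (fun i => xi i 0%nat) (fun i => eta i 0%nat).
Definition ga (i j k l : nat) : R := if (Nat.eqb i k && Nat.eqb j 0 && Nat.eqb l 0)%bool then 1 else 0.
Definition gc (i j k l : nat) : R := if (Nat.eqb i 0 && Nat.eqb k 0 && Nat.eqb j 0 && Nat.eqb l 0)%bool then 10000 else 0.
Definition GcS (i j k l : nat) (X : mat) : R := ga i j k l + 0 * X 0%nat 0%nat + gc i j k l * (X 0%nat 0%nat * X 0%nat 0%nat).

Lemma sphere_riem n : (0 < n)%nat -> riemannian_metric n 1 (gS n).
Proof.
  intros Hn. split.
  - intros X HX. split; [|split].
    + intros xi eta _ _. unfold gS, sphere_metric. apply rsum_ext; intros; ring.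
    + intros a b xi1 xi2 eta _ _ _. unfold gS, sphere_metric, madd, mscale.
      rewrite <- !rsum_scal, <- rsum_plus. apply rsum_ext; intros; ring.
    + intros xi [HS _] [i [j Hij]].
      destruct (Nat.ltb_spec i n); [|exfalso; apply Hij; apply HS; lia].
      destruct (Nat.eqb_spec j 0); [subst|exfalso; apply Hij; apply HS; lia].
      unfold gS, sphere_metric.
      apply Rlt_le_trans with (xi i 0%nat * xi i 0%nat). nra.
      eapply Rle_trans; [apply (rsum_term_le n (fun i => xi i 0%nat * xi i 0%nat)); auto; intros; nra|].
      apply rsum_le. intros k Hk. destruct (Nat.eqb k 0).
      assert (0 <= 10000 * X 0%nat 0%nat ^ 2) by (simpl; nra). nra. nra.
  - exists GcS. split.
    + intros i j k l kk. apply poly_Ck; lia.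
    + intros X xi eta HX [Hxs _] [Hes _]. unfold gS, sphere_metric. apply rsum_ext. intros i Hi.
      cbn [rsum]. rewrite Rplus_0_l.
      rewrite (rsum_ext n _ (fun k => if Nat.eqb k i then
         (if Nat.eqb i 0 then 10000 * X 0%nat 0%nat ^ 2 + 1 else 1) * xi i 0%nat * eta i 0%nat else 0)).
      rewrite rsum_delta by auto. ring.
      intros k Hk. cbn [rsum]. unfold GcS, ga, gc.
      destruct (Nat.eqb_spec k i), (Nat.eqb_spec i k), (Nat.eqb_spec i 0), (Nat.eqb_spec k 0); subst; simpl; try lia; ring.
Qed.

Definition colm n (v : vec) : mat := fun i j => if (Nat.ltb i n && Nat.eqb j 0)%bool then v i else 0.

Lemma sphere_id n A x eta u v : (0 < n)%nat ->
  stiefel n 1 (colm n x) -> tangent n 1 (colm n x) (colm n eta) -> (forall i, (i < n)%nat -> v i = u * eta i) ->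
  sphere_cost n A (sphere_retr n x v) = costf n 1 A (fun _ => 1) (qf n 1 (madd (colm n x) (mscale u (colm n eta)))).
Proof.
  intros Hn HX Ht Hv. set (B := madd (colm n x) (mscale u (colm n eta))).
  assert (HBs : supp n 1 B) by (apply supp_madd; [apply HX|apply Ht]).
  rewrite qf_gs_full by (auto; apply FR_tangent; auto).
  assert (HB : forall a, (a < n)%nat -> B a 0%nat = x a + v a).
  { intros a Ha. unfold B, madd, mscale, colm. destruct (Nat.ltb_spec a n); [|lia]. simpl. rewrite Hv; auto. }
  assert (HQ : forall a, (a < n)%nat -> gs n B 1 a 0%nat = (x a + v a) * / vnorm n (vadd x v)).
  { intros a Ha. rewrite gs_lt by lia. rewrite q_eq. unfold rr. cbn [rsum]. rewrite HB by auto.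
    replace (x a + v a - 0) with (x a + v a) by ring. unfold vnorm. f_equal. f_equal. f_equal. rewrite nrm_eq. unfold vdot, vadd. apply rsum_ext. intros l Hl.
    unfold rr; cbn [rsum]. rewrite HB by auto. ring. }
  set (vn := vnorm n (vadd x v)) in *.
  unfold sphere_cost, sphere_retr, costf, mtrace, mmul, mtr, diagm. cbn [rsum]. simpl Nat.eqb.
  rewrite rsum_swap. rewrite Rplus_0_l, Rplus_0_l, Rmult_1_r. unfold vscale, vadd. apply rsum_ext. intros k Hk. rewrite HQ by auto.
  rewrite <- rsum_scalr. apply rsum_ext. intros i Hi. rewrite HQ by auto. change (vnorm n (fun i0 => x i0 + v i0)) with vn. ring.
Qed.


Lemma part2 n A : (1 <= n)%nat ->
     exists L, 0 < L /\
       forall (x eta : vec) (t : R),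
         vnorm n x = 1 -> vdot n x eta = 0 ->
         sqrt (sphere_metric n x eta eta) = 1 -> 0 <= t ->
         exists d1 d0 : R,
           derivable_pt_lim
             (fun s => sphere_cost n A (sphere_retr n x (vadd (vscale t eta) (vscale s eta)))) 0 d1 /\
           derivable_pt_lim
             (fun s => sphere_cost n A (sphere_retr n x (vscale s eta))) 0 d0 /\
           Rabs (d1 - d0) <= L * t.
Proof.
  intros Hn. destruct (part1 n 1 A (fun _ => 1) (gS n) (sphere_riem n Hn)) as [L [HL HLb]].
  exists L. split; auto. intros x eta t Hx Hxe Hg Ht.
  assert (Hsupp : forall v, supp n 1 (colm n v)).
  { intros v i j H. unfold colm. destruct (Nat.ltb_spec i n), (Nat.eqb_spec j 0); simpl; auto; lia. }
  assert (Hdot : forall v w, rsum n (fun l => colm n v l 0%nat * colm n w l 0%nat) = vdot n v w).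
  { intros v w. unfold vdot, colm. apply rsum_ext. intros l Hl. destruct (Nat.ltb_spec l n); [|lia]. reflexivity. }
  assert (HX : stiefel n 1 (colm n x)).
  { split; auto. intros i j Hi Hj. replace i with 0%nat by lia. replace j with 0%nat by lia.
    unfold mmul, mtr, idm. rewrite Hdot. simpl. apply sqrt_eq1; auto. }
  assert (HE : tangent n 1 (colm n x) (colm n eta)).
  { split; auto. intros i j Hi Hj. replace i with 0%nat by lia. replace j with 0%nat by lia.
    unfold madd, mmul, mtr, mzero. rewrite !Hdot. unfold vdot in *.
    rewrite (rsum_ext n (fun i => eta i * x i) (fun i => x i * eta i)) by (intros; ring). lra. }
  assert (Hg' : sqrt (gS n (colm n x) (colm n eta) (colm n eta)) = 1).
  { rewrite <- Hg. f_equal. unfold gS, sphere_metric. apply rsum_ext. intros i Hi. unfold colm.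
    destruct (Nat.ltb_spec i n), (Nat.ltb_spec 0 n); try lia. reflexivity. }
  destruct (HLb (colm n x) (colm n eta) t HX HE Hg' Ht) as [d1 [d0 [H1 [H2 H3]]]].
  exists d1, d0. split; [|split; auto].
  - eapply dpl_ext; [apply H1| |reflexivity]. intros s. symmetry.
    rewrite (sphere_id n A x eta (t + s)); auto.
    unfold qr_retr. f_equal. f_equal. apply mat_ext; intros; unfold madd, mscale; ring.
    intros i Hi; unfold vadd, vscale; ring.
  - eapply dpl_ext; [apply H2| |reflexivity]. intros s. symmetry.
    rewrite (sphere_id n A x eta s); auto.
Qed.

Theorem mainTheorem6 :
  (forall (n p : nat) (A : mat) (mu : nat -> R) (g : mat -> mat -> mat -> R),
     (1 <= p)%nat -> (p <= n)%nat ->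
     symmetric n A ->
     0 < mu 0%nat -> (forall i, (S i < p)%nat -> mu i < mu (S i)) ->
     riemannian_metric n p g ->
     exists L, 0 < L /\
       forall (X eta : mat) (t : R),
         stiefel n p X -> tangent n p X eta -> sqrt (g X eta eta) = 1 -> 0 <= t ->
         exists d1 d0 : R,
           derivable_pt_lim
             (fun s => costf n p A mu (qr_retr n p X (madd (mscale t eta) (mscale s eta)))) 0 d1 /\
           derivable_pt_lim
             (fun s => costf n p A mu (qr_retr n p X (mscale s eta))) 0 d0 /\
           Rabs (d1 - d0) <= L * t)
  /\
  (forall (n : nat) (A : mat),
     (1 <= n)%nat -> symmetric n A ->
     exists L, 0 < L /\
       forall (x eta : vec) (t : R),
         vnorm n x = 1 -> vdot n x eta = 0 ->
         sqrt (sphere_metric n x eta eta) = 1 -> 0 <= t ->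
         exists d1 d0 : R,
           derivable_pt_lim
             (fun s => sphere_cost n A (sphere_retr n x (vadd (vscale t eta) (vscale s eta)))) 0 d1 /\
           derivable_pt_lim
             (fun s => sphere_cost n A (sphere_retr n x (vscale s eta))) 0 d0 /\
           Rabs (d1 - d0) <= L * t).
Proof.
  split.
  - intros n p A mu g _ _ _ _ _ Hg. apply part1; auto.
  - intros n A Hn _. apply part2; auto.
Qed.
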